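(* Let $V\subseteq\mathcal V$ be finite and $\mathcal E,\mathcal F\in\mathit{DProg}(V)$. (1) $\mathcal E\le_T^e\mathcal F$ implies $\mathcal E\le_T^p\mathcal F$, but the converse fails in general (there exist $\mathcal E,\mathcal F$ with $\mathcal E\le_T^p\mathcal F$ and not $\mathcal E\le_T^e\mathcal F$). (2) $\mathcal E\le_P^e\mathcal F$ implies $\mathcal E\le_P^p\mathcal F$, but the converse fails in general.
   Context: $\mathcal V$ is a countably infinite set of qubit variables; $\mathcal H_V=\bigotimes_{q\in V}\mathcal H_q$. $\mathcal D(\mathcal H)$: partial density operators; $\mathcal P(\mathcal H)$: effects (positive operators with eigenvalues in $[0,1]$); $\mathcal S(\mathcal H)$: projectors. $\mathit{DProg}(V)$: completely positive trace-nonincreasing super-operators on $\mathcal L(\mathcal H_V)$. Operators/super-operators on subsystems are implicitly extended by tensoring with identities. For finite $W$ and $M,N\in\mathcal P(\mathcal H_W)$: $\mathcal E\models_{tot}(M,N)$ iff for all finite $X\supseteq V\cup W$ and $\rho\in\mathcal D(\mathcal H_X)$, ${\rm tr}(M\rho)\le{\rm tr}(N\mathcal E(\rho))$; $\mathcal E\models_{par}(M,N)$ iff for all such $X,\rho$, ${\rm tr}(M\rho)\le{\rm tr}(N\mathcal E(\rho))+{\rm tr}(\rho)-{\rm tr}(\mathcal E(\rho))$. $\mathcal E\le_T^e\mathcal F$ iff for every finite $W$ and $M,N\in\mathcal P(\mathcal H_W)$, $\mathcal E\models_{tot}(M,N)\Rightarrow\mathcal F\models_{tot}(M,N)$; $\le_T^p$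 is defined identically but with $M,N$ ranging only over projectors $\mathcal S(\mathcal H_W)$; $\le_P^e,\le_P^p$ likewise with $\models_{par}$. *)

(* Defs.v *)
From HB Require Import structures.
From mathcomp Require Import all_boot all_algebra finmap.
From mathcomp.real_closed Require Import complex.
From mathcomp Require Import Rstruct.
Set Implicit Arguments. Unset Strict Implicit. Unset Printing Implicit Defensive.
Import GRing.Theory Num.Theory.
Local Open Scope ring_scope.


Definition C : numClosedFieldType := (Rdefinitions.R)[i].

(* Computational basis of H_X = tensor_{q in X} H_q (H_q = C^2):
   assignments of a bit to each variable of X. *)
Definition basis (X : {fset nat}) : finType := {ffun X -> bool}.

(* Operators on the Hilbert space with orthonormal basis indexed by I. *)
Definition opr (I : finType) := I -> I -> C.
Definition sop (I : finType) := opr I -> opr I.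

Section Ops.
Context {I : finType}.
Definition mulo (A B : opr I) : opr I := fun i j => \sum_k A i k * B k j.
Definition tro (A : opr I) : C := \sum_i A i i.
Definition adjo (A : opr I) : opr I := fun i j => (A j i)^*.
Definition appo (A : opr I) (v : I -> C) : I -> C := fun i => \sum_j A i j * v j.

Definition positive (A : opr I) : Prop :=
  forall v : I -> C, 0 <= \sum_i \sum_j (v i)^* * A i j * v j.
Definition eigenvalue (A : opr I) (l : C) : Prop :=
  exists v : I -> C, (exists i, v i != 0) /\ forall i, appo A v i = l * v i.
Definition pdensity (A : opr I) : Prop := positive A /\ tro A <= 1.
Definition effect (A : opr I) : Prop :=
  positive A /\ forall l, eigenvalue A l -> 0 <= l <= 1.
Definition projector (A : opr I) : Prop :=
  (forall i j, mulo A A i j = A i j) /\ (forall i j, adjo A i j = A i j).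

Definition linear_sop (E : sop I) : Prop :=
  forall (a : C) (A B : opr I) i j,
    E (fun k l => a * A k l + B k l) i j = a * E A i j + E B i j.
(* E (x) id_K, for an ancilla with basis K *)
Definition sop_ext (K : finType) (E : sop I) : sop (prod I K) :=
  fun rho ik jl => E (fun i' j' => rho (i', ik.2) (j', jl.2)) ik.1 jl.1.
Definition trace_nonincreasing (E : sop I) : Prop :=
  forall rho : opr I, positive rho -> tro (E rho) <= tro rho.
End Ops.

Definition completely_positive {I : finType} (E : sop I) : Prop :=
  forall (k : nat) (rho : opr (prod I 'I_k)),
    positive rho -> positive (sop_ext (K := 'I_k) E rho).

Definition DProg (V : {fset nat}) (E : sop (basis V)) : Prop :=
  linear_sop E /\ completely_positive E /\ trace_nonincreasing E.

(* value of a basis state of H_X at a variable (false outside X; unused) *)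
Definition glob (X : {fset nat}) (s : basis X) (q : nat) : bool :=
  if (insub q : option X) is Some x then s x else false.
Definition restr (X W : {fset nat}) (s : basis X) : basis W :=
  [ffun w : W => glob s (val w)].
Definition agree_out (X W : {fset nat}) (s t : basis X) : bool :=
  [forall x : X, (val x \notin W) ==> (s x == t x)].
Definition join (V X : {fset nat}) (u : basis V) (s : basis X) : basis X :=
  [ffun x : X => if val x \in V then glob u (val x) else s x].

(* M (x) I_{X \ W}  (meaningful when W is a subset of X) *)
Definition extop (W X : {fset nat}) (M : opr (basis W)) : opr (basis X) :=
  fun s t => if agree_out W s t then M (restr W s) (restr W t) else 0.
(* E (x) id_{X \ V} (meaningful when V is a subset of X, E linear) *)
Definition extsop (V X : {fset nat}) (E : sop (basis V)) : sop (basis X) :=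
  fun rho s t => E (fun u v => rho (join u s) (join v t)) (restr V s) (restr V t).

Definition sat_tot (V W : {fset nat}) (E : sop (basis V)) (M N : opr (basis W)) : Prop :=
  forall X : {fset nat}, (V `|` W `<=` X)%fset ->
  forall rho : opr (basis X), pdensity rho ->
    tro (mulo (extop (X := X) M) rho) <= tro (mulo (extop (X := X) N) (extsop (X := X) E rho)).
Definition sat_par (V W : {fset nat}) (E : sop (basis V)) (M N : opr (basis W)) : Prop :=
  forall X : {fset nat}, (V `|` W `<=` X)%fset ->
  forall rho : opr (basis X), pdensity rho ->
    tro (mulo (extop (X := X) M) rho) <=
      tro (mulo (extop (X := X) N) (extsop (X := X) E rho)) + tro rho - tro (extsop (X := X) E rho).

Definition le_T_e (V : {fset nat}) (E F : sop (basis V)) : Prop :=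
  forall (W : {fset nat}) (M N : opr (basis W)), effect M -> effect N ->
    sat_tot E M N -> sat_tot F M N.
Definition le_T_p (V : {fset nat}) (E F : sop (basis V)) : Prop :=
  forall (W : {fset nat}) (M N : opr (basis W)), projector M -> projector N ->
    sat_tot E M N -> sat_tot F M N.
Definition le_P_e (V : {fset nat}) (E F : sop (basis V)) : Prop :=
  forall (W : {fset nat}) (M N : opr (basis W)), effect M -> effect N ->
    sat_par E M N -> sat_par F M N.
Definition le_P_p (V : {fset nat}) (E F : sop (basis V)) : Prop :=
  forall (W : {fset nat}) (M N : opr (basis W)), projector M -> projector N ->
    sat_par E M N -> sat_par F M N.

(* Main.v *)
Require Import Defs.
From HB Require Import structures.
From mathcomp Require Import all_boot all_order all_algebra finmap.
From Stdlib Require Import FunctionalExtensionality.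
Set Implicit Arguments. Unset Strict Implicit. Unset Printing Implicit Defensive.
Import Order.TTheory GRing.Theory Num.Theory.
Local Open Scope ring_scope.
From mathcomp Require Import ring.
HB.instance Definition _ := Num.ClosedField.copy (complex.complex Rdefinitions.RbaseSymbolsImpl.R) C.
Ltac cring := match goal with |- ?a = ?b => change (@eq (Num.ClosedField.sort C) a b); ring end.

Section Gen.
Variable I : finType.
Implicit Types (v w u : I -> C) (A B rho : opr I).

Definition ip v w : C := \sum_i (v i)^* * w i.
Definition herm A := forall i j, (A j i)^* = A i j.
Definition idem A := forall i j, mulo A A i j = A i j.
Definition rk1 w : opr I := fun s t => w s * (w t)^*.

Lemma ip_ge0 v : 0 <= ip v v.
Proof. by apply: sumr_ge0 => i _; rewrite mulrC mul_conjC_ge0. Qed.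

Lemma ip_eq0 v : ip v v = 0 -> forall i, v i = 0.
Proof.
move=> h i.
have hp : forall j, xpredT j -> 0 <= (v j)^* * v j.
  by move=> j _; rewrite mulrC mul_conjC_ge0.
have := @psumr_eq0P _ _ xpredT (fun i => (v i)^* * v i) hp h i isT.
by move/eqP; rewrite mulf_eq0 conjC_eq0 orbb => /eqP.
Qed.

Lemma appo_mul A B v i : appo A (appo B v) i = appo (mulo A B) v i.
Proof.
rewrite /appo /mulo; under eq_bigr do rewrite mulr_sumr.
rewrite exchange_big; apply: eq_bigr => k _; rewrite mulr_suml.
by apply: eq_bigr => j _; rewrite mulrA.
Qed.

Lemma ip_adj A v u : herm A -> ip (appo A v) u = ip v (appo A u).
Proof.
move=> hA; rewrite /ip /appo; under eq_bigr do rewrite rmorph_sum mulr_suml.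
rewrite exchange_big; apply: eq_bigr => j _; rewrite mulr_sumr.
apply: eq_bigr => i _; rewrite rmorphM /=.
rewrite hA; cring.
Qed.

Lemma proj_ip N w : herm N -> idem N ->
  ip (appo N w) (appo N w) = ip w (appo N w).
Proof.
move=> hh hi; rewrite ip_adj //; apply: eq_bigr => i _; rewrite appo_mul.
by congr (_ * _); apply: eq_bigr => j _; rewrite hi.
Qed.

Lemma ip_expand u v : ip (fun i => u i - v i) (fun i => u i - v i) =
  ip u u - ip u v - ip v u + ip v v.
Proof.
rewrite /ip -!sumrB -big_split; apply: eq_bigr => i _; rewrite rmorphB /=; cring.
Qed.

Lemma proj_gap N w : herm N -> idem N ->
  ip w w - ip w (appo N w) =
  ip (fun i => w i - appo N w i) (fun i => w i - appo N w i).
Proof.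
move=> hh hi; rewrite ip_expand proj_ip // ip_adj //.
cring.
Qed.

Lemma rk1_pos w : positive (rk1 w).
Proof.
move=> v.
have -> : \sum_i \sum_j (v i)^* * rk1 w i j * v j = (ip w v)^* * ip w v.
  rewrite /ip rmorph_sum mulr_suml; apply: eq_bigr => i _; rewrite mulr_sumr.
  by apply: eq_bigr => j _; rewrite /rk1 rmorphM /= (conjCK (w i)); cring.
by rewrite mulrC mul_conjC_ge0.
Qed.

Lemma tr_rk1 A w : tro (mulo A (rk1 w)) = ip w (appo A w).
Proof.
rewrite /tro /mulo /ip /appo; apply: eq_bigr => i _; rewrite mulr_sumr.
by apply: eq_bigr => k _; rewrite /rk1; cring.
Qed.

Lemma tro_rk1 w : tro (rk1 w) = ip w w.
Proof. by apply: eq_bigr => i _; rewrite /rk1 mulrC. Qed.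

Lemma tr_scale A B c : tro (mulo A (fun s t => c * B s t)) = c * tro (mulo A B).
Proof.
rewrite /tro /mulo mulr_sumr; apply: eq_bigr => i _; rewrite mulr_sumr.
by apply: eq_bigr => k _; cring.
Qed.

Lemma proj_tr_ge0 A rho : herm A -> idem A -> positive rho -> 0 <= tro (mulo A rho).
Proof.
move=> hh hi hp.
have -> : tro (mulo A rho) =
  \sum_m \sum_a \sum_b (A a m)^* * rho a b * A b m.
  rewrite /tro /mulo.
  under eq_bigr => i _ do under eq_bigr => k _ do rewrite -hi /mulo mulr_suml.
  under eq_bigr do rewrite exchange_big.
  rewrite exchange_big; apply: eq_bigr => m _.
  rewrite exchange_big; apply: eq_bigr => k _.
  apply: eq_bigr => i _; rewrite hh; cring.
by apply: sumr_ge0 => m _; apply: (hp (fun b => A b m)).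
Qed.

Lemma tro_ge0 rho : positive rho -> 0 <= tro rho.
Proof.
move=> hp; apply: sumr_ge0 => i _.
have H := hp (fun a => (a == i)%:R).
have e : \sum_a \sum_b ((a == i)%:R)^* * rho a b * (b == i)%:R = rho i i.
  rewrite (bigD1 i) //= [X in _ + X]big1 ?addr0.
    rewrite (bigD1 i) //= [X in _ + X]big1 ?addr0.
      by rewrite eqxx rmorph1 mul1r mulr1.
    by move=> b /negPf ->; rewrite mulr0.
  move=> a /negPf ->; apply: big1 => b _; by rewrite rmorph0 !mul0r.
by rewrite -e.
Qed.

Lemma proj_effect A : projector A -> effect A.
Proof.
case=> hi hh; have hh' : herm A by move=> i j; apply: hh.
split.
  move=> v; have := proj_tr_ge0 hh' hi (rk1_pos v).
  rewrite tr_rk1 /ip /appo => h; apply: (le_trans h); rewrite le_eqVlt; apply/orP; left.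
  apply/eqP; apply: eq_bigr => i _; rewrite mulr_sumr; apply: eq_bigr => j _.
  by rewrite mulrA.
move=> l [v [[i0 hi0] hv]].
have e1 : appo A (appo A v) i0 = l * (l * v i0).
  rewrite {1}/appo. under eq_bigr do rewrite hv.
  rewrite -hv /appo mulr_sumr; apply: eq_bigr => j _; cring.
have e2 : appo A (appo A v) i0 = l * v i0.
  rewrite appo_mul -hv; apply: eq_bigr => j _; by rewrite hi.
have : (l * l - l) * v i0 == 0 by rewrite mulrBl -mulrA -e1 e2 subrr.
rewrite mulf_eq0 (negPf hi0) orbF -{3}(mulr1 l) -mulrBr mulf_eq0 subr_eq0.
by case/orP=> /eqP ->; rewrite ?lexx ?ler01.
Qed.

End Gen.
Lemma glob_in (Y : {fset nat}) (s : basis Y) (x : Y) : glob s (val x) = s x.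
Proof. by rewrite /glob valK. Qed.

Section Ext.
Variables W X : {fset nat}.

Lemma agree_sym (s t : basis X) : agree_out W s t = agree_out W t s.
Proof.
apply/forallP/forallP => h x; have := h x; case: (val x \notin W) => //=;
  by rewrite eq_sym.
Qed.

Lemma agree_trans (s t r : basis X) :
  agree_out W s t -> agree_out W t r -> agree_out W s r.
Proof.
move=> /forallP h1 /forallP h2; apply/forallP => x.
apply/implyP => hx; move/implyP: (h1 x) => /(_ hx) /eqP ->.
by move/implyP: (h2 x) => /(_ hx).
Qed.

Lemma agree_join (u : basis W) (s : basis X) : agree_out W s (join u s).
Proof.
by apply/forallP => x; apply/implyP => hx; rewrite ffunE (negPf hx).
Qed.

Lemma join_restr (s k : basis X) : agree_out W s k -> join (restr W k) s = k.
Proof.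
move=> /forallP h; apply/ffunP => x; rewrite ffunE; case: ifP => xW.
  by rewrite /glob (insubT (fun y => y \in W) xW) ffunE /= glob_in.
by move/implyP: (h x); rewrite xW => /(_ isT) /eqP.
Qed.

Hypothesis sub : (W `<=` X)%fset.

Lemma restr_join (u : basis W) (s : basis X) : restr W (join u s) = u.
Proof.
apply/ffunP => w; rewrite ffunE.
have wX : val w \in X by apply: (fsubsetP sub); apply: fsvalP.
by rewrite /glob (insubT (fun y => y \in X) wX) ffunE /= (fsvalP w) glob_in.
Qed.

Lemma ext_mul (A B : opr (basis W)) s t :
  mulo (extop (X := X) A) (extop (X := X) B) s t = extop (X := X) (mulo A B) s t.
Proof.
rewrite /mulo /extop; case: (boolP (agree_out W s t)) => hst.
  rewrite (bigID (agree_out W s)) /= [X in _ + X]big1 ?addr0; last first.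
    by move=> k /negPf ->; rewrite mul0r.
  rewrite (reindex_onto (fun u => join u s) (restr W)) /=; last first.
    by move=> k; apply: join_restr.
  apply: eq_big => [u|u _]; first by rewrite agree_join restr_join eqxx.
  rewrite agree_join (agree_trans _ hst); last by rewrite agree_sym agree_join.
  by rewrite restr_join.
apply: big1 => k _; case: (boolP (agree_out W s k)) => h1; last by rewrite mul0r.
case: (boolP (agree_out W k t)) => h2; last by rewrite mulr0.
by rewrite (agree_trans h1 h2) in hst.
Qed.

Lemma ext_herm (A : opr (basis W)) : herm A -> herm (extop (X := X) A).
Proof.
move=> hA s t; rewrite /extop agree_sym; case: ifP => _; first by apply: hA.
by rewrite conjC0.
Qed.

Lemma ext_idem (A : opr (basis W)) : idem A -> idem (extop (X := X) A).
Proof.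
move=> hA s t; rewrite ext_mul /extop; case: ifP => // _; by rewrite hA.
Qed.

End Ext.

Lemma extop_id (W : {fset nat}) (M : opr (basis W)) : extop (X := W) M = M.
Proof.
do 2 apply: functional_extensionality => ?.
have rs : forall s : basis W, restr W s = s.
  by move=> s; apply/ffunP => w; rewrite ffunE glob_in.
rewrite /extop !rs; case: ifP => // /negP []; apply/forallP => x.
by rewrite (fsvalP x).
Qed.

Definition V0 : {fset nat} := fset0.

Lemma join0 (X : {fset nat}) (u : basis V0) (s : basis X) : join u s = s.
Proof. by apply/ffunP => x; rewrite ffunE in_fset0. Qed.

Lemma agree0 (X : {fset nat}) (s t : basis X) : agree_out V0 s t = (s == t).
Proof.
apply/forallP/eqP => [h|-> x]; last by rewrite eqxx implybT.
by apply/ffunP => x; move/implyP: (h x); rewrite in_fset0 => /(_ isT) /eqP.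
Qed.

Definition i0 : basis V0 := [ffun _ => false].

Lemma basis0_eq (i : basis V0) : i = i0.
Proof. by apply/ffunP => x; have := fsvalP x; rewrite in_fset0. Qed.

Lemma sum0 (F : basis V0 -> C) : \sum_i F i = F i0.
Proof.
rewrite (bigD1 i0) //= big1 ?addr0 // => i; by rewrite (basis0_eq i) eqxx.
Qed.

Lemma tr_const (X : {fset nat}) (c : C) (rho : opr (basis X)) :
  tro (mulo (extop (X := X) (fun _ _ : basis V0 => c)) rho) = c * tro rho.
Proof.
rewrite /tro /mulo mulr_sumr; apply: eq_bigr => i _.
rewrite (bigD1 i) //= big1 ?addr0; first by rewrite /extop agree0 eqxx.
by move=> k hk; rewrite /extop agree0 eq_sym (negPf hk) mul0r.
Qed.

Lemma const_effect (c : C) : 0 <= c -> c <= 1 -> effect (fun _ _ : basis V0 => c).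
Proof.
move=> h0 h1; split.
  move=> v; rewrite !sum0 mulrC mulrA; apply: mulr_ge0 => //.
  exact: mul_conjC_ge0.
move=> l [v [[i hi] hv]]; move: (hv i); rewrite /appo sum0 (basis0_eq i) => e.
rewrite (basis0_eq i) in hi.
have : (c - l) * v i0 == 0 by rewrite mulrBl e subrr.
by rewrite mulf_eq0 (negPf hi) orbF subr_eq0 => /eqP <-; rewrite h0 h1.
Qed.

Definition scl (c : C) : sop (basis V0) := fun rho i j => c * rho i j.

Lemma extsop_scl (X : {fset nat}) c (rho : opr (basis X)) :
  extsop (X := X) (scl c) rho = fun s t => c * rho s t.
Proof.
do 2 apply: functional_extensionality => ?.
by rewrite /extsop /scl !join0.
Qed.

Lemma tro_scale (I : finType) (c : C) (rho : opr I) :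
  tro (fun s t => c * rho s t) = c * tro rho.
Proof. by rewrite /tro mulr_sumr. Qed.

Lemma DProg_scl c : 0 <= c -> c <= 1 -> DProg (scl c).
Proof.
move=> h0 h1; split; [|split].
- by move=> a A B i j; rewrite /scl; cring.
- move=> k rho hp v.
  have -> : \sum_i \sum_j (v i)^* * sop_ext (scl c) rho i j * v j =
     c * \sum_i \sum_j (v i)^* * rho i j * v j.
    rewrite mulr_sumr; apply: eq_bigr => -[a b] _; rewrite mulr_sumr.
    by apply: eq_bigr => -[a' b'] _; rewrite /sop_ext /scl /=; cring.
  by apply: mulr_ge0 => //; apply: hp.
- move=> rho hp; rewrite tro_scale.
  have ht := tro_ge0 hp.
  rewrite -subr_ge0 -{1}(mul1r (tro rho)) -mulrBl.
  by apply: mulr_ge0 => //; rewrite subr_ge0.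
Qed.
Section Col.
Variable W : {fset nat}.
Variables M N : opr (basis W).
Hypothesis pM : projector M.
Hypothesis pN : projector N.
Variable j : basis W.
Let w := fun s => M s j.
Let hM : herm M. Proof. by move=> a b; apply: pM.2. Qed.
Let iM : idem M. Proof. exact: pM.1. Qed.

Lemma col_fix : forall i, appo M w i = w i.
Proof. by move=> i; rewrite /appo /w -(iM i j). Qed.

Lemma col_ip : ip w w = w j.
Proof.
rewrite /ip /w -(iM j j); apply: eq_bigr => s _; by rewrite hM.
Qed.

Lemma col_pd : pdensity (rk1 w).
Proof.
split; first exact: rk1_pos.
rewrite tro_rk1.
have x0 : 0 <= ip w w := ip_ge0 w.
have hxx : ip w w * ip w w <= ip w w.
  have e : ip w w = (w j)^* * w j + \sum_(i | i != j) (w i)^* * w i.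
    by rewrite /ip (bigD1 j).
  have ej : (w j)^* * w j = ip w w * ip w w by rewrite -col_ip geC0_conj ?ip_ge0.
  rewrite [leRHS]e ej lerDl; by apply: sumr_ge0 => i _; rewrite mulrC mul_conjC_ge0.
case: (boolP (ip w w == 0)) => [/eqP -> | nz]; first by rewrite ler01.
have xp : 0 < ip w w by rewrite lt_def nz x0.
by rewrite -(ler_pM2l xp) mulr1.
Qed.

End Col.

Definition h : C := 2^-1.
Lemma h_gt0 : 0 < h. Proof. by rewrite invr_gt0 ltr0n. Qed.
Lemma h_le1 : h <= 1. Proof. by rewrite /h invf_le1 ?ltr0n // ler1n. Qed.
Lemma h_half x : x - h * x = h * x.
Proof.
have e : h + h = 1.
  by rewrite /h -mulr2n -(mulr_natr (2^-1 : C) 2) mulVf // pnatr_eq0.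
by rewrite -{1}(mul1r x) -e mulrDl addrK.
Qed.

Lemma sub_W (W : {fset nat}) : (V0 `|` W `<=` W)%fset.
Proof. by rewrite fset0U fsubset_refl. Qed.

Lemma tot_M0 W (M N : opr (basis W)) : projector M -> projector N ->
  sat_tot (scl h) M N -> forall i j, M i j = 0.
Proof.
move=> pM pN H i j.
have hN : herm N by move=> a b; apply: pN.2.
have HW := H W (sub_W W) _ (col_pd pM j).
rewrite extsop_scl !extop_id tr_scale !tr_rk1 in HW.
have e : ip (fun s => M s j) (appo M (fun s => M s j)) = ip (fun s => M s j) (fun s => M s j).
  by apply: eq_bigr => s _; rewrite col_fix.
rewrite e in HW; set x := ip _ _ in HW e; set y := ip _ _ in HW.
have gap := proj_gap (fun s => M s j) hN pN.1.
have : 0 <= x - y by rewrite gap ip_ge0.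
rewrite subr_ge0 => hyx.
have x0 : 0 <= x := ip_ge0 _.
have hx : x <= h * x by apply: (le_trans HW); rewrite ler_wpM2l // ltW // h_gt0.
have : x == 0.
  rewrite eq_le x0 andbT -(pmulr_rle0 _ h_gt0) -h_half subr_le0 //.
move/eqP=> x00; exact: (ip_eq0 x00 i).
Qed.

Lemma par_NM W (M N : opr (basis W)) : projector M -> projector N ->
  sat_par (scl h) M N -> forall i j, mulo N M i j = M i j.
Proof.
move=> pM pN H i j.
have hN : herm N by move=> a b; apply: pN.2.
have HW := H W (sub_W W) _ (col_pd pM j).
rewrite extsop_scl !extop_id tr_scale tro_scale !tr_rk1 tro_rk1 in HW.
have e : ip (fun s => M s j) (appo M (fun s => M s j)) = ip (fun s => M s j) (fun s => M s j).
  by apply: eq_bigr => s _; rewrite col_fix.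
rewrite e in HW; set x := ip _ _ in HW e; set y := ip _ _ in HW.
have gap := proj_gap (fun s => M s j) hN pN.1.
rewrite -/x -/y in gap.
have hxy : x <= y.
  rewrite -(ler_pM2l h_gt0).
  rewrite -addrA h_half in HW.
  by rewrite -(lerD2r (h * x)) -{1}h_half subrK.
have : x - y == 0 by rewrite eq_le subr_le0 hxy /= gap ip_ge0.
rewrite gap => /eqP /ip_eq0 /(_ i) /eqP; rewrite subr_eq0 => /eqP e2.
by rewrite [RHS]e2.
Qed.

Lemma diff_proj W (M N : opr (basis W)) : projector M -> projector N ->
  (forall i j, mulo N M i j = M i j) ->
  herm (fun s t => N s t - M s t) /\ idem (fun s t => N s t - M s t).
Proof.
move=> [iM hM] [iN hN] hNM.
have hM' : herm M by move=> a b; apply: hM.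
have hN' : herm N by move=> a b; apply: hN.
have hMN : forall i j, mulo M N i j = M i j.
  move=> i j; have := congr1 Num.conj (hNM j i).
  rewrite /mulo rmorph_sum hM' => <-; apply: eq_bigr => k _.
  by rewrite rmorphM /= hN' hM' mulrC.
split; first by move=> a b; rewrite rmorphB /= hM' hN'.
move=> i j; rewrite /mulo.
have e : forall k, (N i k - M i k) * (N k j - M k j) =
   N i k * N k j - N i k * M k j - M i k * N k j + M i k * M k j.
  by move=> k; cring.
under eq_bigr do rewrite e.
rewrite big_split /= !sumrB.
have := iN i j; have := iM i j; have := hNM i j; have := hMN i j.
rewrite /mulo => -> -> -> ->; cring.
Qed.

Lemma ext_diff X W (M N : opr (basis W)) (rho : opr (basis X)) :
  tro (mulo (extop (X := X) (fun s t => N s t - M s t)) rho) =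
  tro (mulo (extop (X := X) N) rho) - tro (mulo (extop (X := X) M) rho).
Proof.
rewrite /tro /mulo -sumrB; apply: eq_bigr => i _; rewrite -sumrB.
apply: eq_bigr => k _; rewrite /extop; case: ifP => _; last by rewrite mul0r subrr.
by rewrite mulrBl.
Qed.

Theorem proposition4p8 :
  ((forall (V : {fset nat}) (E F : sop (basis V)),
      DProg E -> DProg F -> le_T_e E F -> le_T_p E F) /\
   (exists (V : {fset nat}) (E F : sop (basis V)),
      DProg E /\ DProg F /\ le_T_p E F /\ ~ le_T_e E F)) /\
  ((forall (V : {fset nat}) (E F : sop (basis V)),
      DProg E -> DProg F -> le_P_e E F -> le_P_p E F) /\
   (exists (V : {fset nat}) (E F : sop (basis V)),
      DProg E /\ DProg F /\ le_P_p E F /\ ~ le_P_e E F)).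
Proof.
have h0 : 0 <= h by apply: ltW; apply: h_gt0.
have pd1 : pdensity (fun _ _ : basis V0 => 1).
  split; first by case: (const_effect ler01 (lexx 1)).
  by rewrite /tro sum0.
have sub0 : (V0 `|` V0 `<=` V0)%fset by apply: sub_W.
split; split.
- move=> V E F _ _ H W M N pM pN; apply: H; exact: proj_effect.
- exists V0, (scl h), (scl 0); split; [|split; [|split]].
  + exact: DProg_scl h0 h_le1.
  + exact: DProg_scl (lexx 0) ler01.
  + move=> W M N pM pN H X sub rho _.
    have M0 := tot_M0 pM pN H.
    rewrite extsop_scl tr_scale mul0r /tro big1 // => i _.
    by rewrite /mulo big1 // => k _; rewrite /extop M0 if_same mul0r.
  + move=> H.
    have Hs : sat_tot (scl h) (fun _ _ : basis V0 => h) (fun _ _ => 1).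
      move=> X _ rho _; by rewrite extsop_scl tr_scale !tr_const mul1r.
    have := H V0 _ _ (const_effect h0 h_le1) (const_effect ler01 (lexx 1)) Hs.
    move=> /(_ V0 sub0 _ pd1).
    rewrite extsop_scl tr_scale !tr_const /tro sum0 mul0r mulr1.
    by rewrite (lt_geF h_gt0).
- move=> V E F _ _ H W M N pM pN; apply: H; exact: proj_effect.
- exists V0, (scl h), (scl 1); split; [|split; [|split]].
  + exact: DProg_scl h0 h_le1.
  + exact: DProg_scl ler01 (lexx 1).
  + move=> W M N pM pN H X sub rho [rp _].
    have [hD iD] := diff_proj pM pN (par_NM pM pN H).
    rewrite extsop_scl tr_scale tro_scale !mul1r addrK -subr_ge0 -ext_diff.
    apply: proj_tr_ge0 rp.
      apply: ext_herm hD.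
    apply: ext_idem iD.
    by move: sub; rewrite fsubUset => /andP [].
  + move=> H.
    have Hs : sat_par (scl h) (fun _ _ : basis V0 => h) (fun _ _ => 0).
      move=> X _ rho _; rewrite extsop_scl tr_scale tro_scale !tr_const mul0r mulr0 add0r.
      by rewrite h_half.
    have := H V0 _ _ (const_effect h0 h_le1) (const_effect (lexx 0) ler01) Hs.
    move=> /(_ V0 sub0 _ pd1).
    rewrite extsop_scl tr_scale tro_scale !tr_const /tro sum0 !mul0r ?mulr0 !mul1r add0r ?mulr1 subrr.
    by rewrite ?mulr1 (lt_geF h_gt0).
Qed.
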